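(* Let $(N,m)$ be a marked P/T net, let $\mathcal U[N,m]=(O,m_0)$ be its unfolding with folding morphism $(f_S,f_T)$, and let $\overleftarrow{(N,m)}=(\overleftarrow O,m_0)$ be its reversible version. Then for every marking $m'$ of $N$: $(N,m)\to^*(N,m')$ if and only if there exists a marking $m''$ of $O$ with $(\overleftarrow O,m_0)\to^*(\overleftarrow O,m'')$ (any finite sequence of forward and backward firings) and $m'=f_S(m'')$.
   Context: A P/T net $N=(S_N,T_N,{}^\bullet\_,\_^\bullet)$ has disjoint sets of places and transitions and functions assigning to each transition a nonempty preset ${}^\bullet\mathsf t$ and nonempty postset $\mathsf t^\bullet$, both multisets over $S_N$. Markings are multisets over $S_N$; firing rule: if ${}^\bullet\mathsf t=m_1$, $\mathsf t^\bullet=m_2$ then $(N,m_1\oplus m_3)\xrightarrow{\mathsf t}(N,m_2\oplus m_3)$; $\to^*$ is a finite sequence of firings. Causality $\preceq$, conflict $\#$ and concurrency $co$ on places and transitions of a net: $\prec=\{(a,\mathsf t)\mid a\in{}^\bullet\mathsf t\}\cup\{(\mathsf t,a)\mid a\in\mathsf t^\bullet\}$, $\preceq$ its reflexive-transitive closure; $x\#y$ iff there are transitions $\mathsf t_1\preceq x$, $\mathsf t_2\preceq y$, $\mathsf t_1\ne\mathsf t_2$, with ${}^\bullet\mathsf t_1\cap{}^\bullet\mathsf t_2\ne\emptyset$; $x\ co\ y$ iff $x\ne y$, $x\not\preceq y$, $y\not\preceq x$, not $x\#y$; a set $X$ satisfies $CO(X)$ iff its elements are pairwise $co$ and only finitely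 many transitions $\mathsf t$ satisfy $\mathsf t\preceq x$ for some $x\in X$. The unfolding $\mathcal U[N,m]=(S,T,{}^\bullet\_,\_^\bullet)$ is the least net such that: (i) if $m(a)=n$ then the places $a(\emptyset,i)$, $1\le i\le n$, are in $S$; (ii) if $H=\{a_j(h_j,i_j)\mid j\in J\}\subseteq S$ with $CO(H)$, $\mathsf t\in T_N$ and ${}^\bullet\mathsf t=\bigoplus_{j\in J}a_j$, then $\mathsf t(H)\in T$ with preset $H$; (iii) if $x=\mathsf t(H)\in T$ then the places $a(\{x\},i)$ for $1\le i\le\mathsf t^\bullet(a)$ are in $S$ and form the postset of $x$. Its initial marking $m_0$ is the set of places $a(\emptyset,i)$; it is an occurrence net. The folding morphism is $f_S(a(h,i))=a$, $f_T(\mathsf t(H))=\mathsf t$, extended to multisets. The reversible version $\overleftarrow O$ of $O$ has the same places, transitions $T_O\cup\{\underline{\mathsf t}\mid\mathsf t\in T_O\}$, forward transitions keep pre/postsets and ${}^\bullet\underline{\mathsf t}=\mathsf t^\bullet$, $\underline{\mathsf t}^\bullet={}^\bullet\mathsf t$; firings of transitions of $T_O$ are forward, of reverse transitions backward. The reversible version of $(N,m)$ is $\overleftarrow{\mathcal U[N,m]}$. *)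

(* Defs.v *)
From HB Require Import structures.
From mathcomp Require Import all_boot.
From Stdlib Require Import Relations.Relation_Operators.

Set Implicit Arguments.
Unset Strict Implicit.
Unset Printing Implicit Defensive.

(** * Multisets
    A (finite) multiset over an eqType A is represented by a [seq A];
    two multisets are equal iff the sequences are permutations of each
    other ([perm_eq]); [m1 ++ m2] is the multiset sum [m1 (+) m2] and
    [count_mem a m] is the multiplicity [m(a)]. *)

Record ptnet (S T : Type) := PTNet { pre : T -> seq S ; post : T -> seq S }.

Definition fire (S T : eqType) (N : ptnet S T) (m1 m2 : seq S) : Prop :=
  exists (t : T) (m3 : seq S),
    perm_eq m1 (pre N t ++ m3) /\ perm_eq m2 (post N t ++ m3).

Definition reach (A : eqType) (step : seq A -> seq A -> Prop) (m m' : seq A) : Prop :=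
  exists m1, clos_refl_trans (seq A) step m m1 /\ perm_eq m1 m'.

(** Its places a(h,i) and transitions t(H) are concrete syntactic terms,
    encoded as generic trees (so they form a choiceType):
      a(h,i)  ~  Node 0 [:: Leaf a; h; Leaf i]    (h = Node 2 [::] for the empty history)
      t(H)    ~  Node 1 (Leaf t :: H)
    A set H of places is represented by the canonical duplicate-free list
    chosen (by the choice operator, which only depends on the extent of the
    predicate) among all enumerations of H, so that each set H yields a
    single transition t(H). *)
Section Unfolding.
Variables (S T : choiceType) (N : ptnet S T) (m : seq S).

Definition code := GenTree.tree (S + T + nat)%type.

Definition mkP (a : S) (h : option code) (i : nat) : code :=
  GenTree.Node 0 [:: GenTree.Leaf (inl (inl a));
                     (if h is Some x then x else GenTree.Node 2 [::]);
                     GenTree.Leaf (inr i)].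

Definition mkT (t : T) (H : seq code) : code :=
  GenTree.Node 1 (GenTree.Leaf (inl (inr t)) :: H).

Definition fS (x : code) : option S :=
  match x with
  | GenTree.Node 0 [:: GenTree.Leaf (inl (inl a)); _; GenTree.Leaf (inr _)] => Some a
  | _ => None
  end.

Definition decT (x : code) : option (T * seq code) :=
  match x with
  | GenTree.Node 1 (GenTree.Leaf (inl (inr t)) :: H) => Some (t, H)
  | _ => None
  end.

Definition is_trans_code (x : code) : bool := decT x != None.

Definition upre (x : code) : seq code :=
  if decT x is Some (_, H) then H else [::].

Definition places_of (ms : seq S) (h : option code) : seq code :=
  flatten [seq [seq mkP a h i | i <- iota 1 (count_mem a ms)] | a <- undup ms].

Definition upost (x : code) : seq code :=
  if decT x is Some (t, _) then places_of (post N t) (Some x) else [::].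

Definition m0 : seq code := places_of m None.

Definition uprec (y x : code) : Prop := y \in upre x \/ x \in upost y.
Definition ucaus : code -> code -> Prop := clos_refl_trans code uprec.

Definition uconfl (x y : code) : Prop :=
  exists t1 t2, is_trans_code t1 /\ is_trans_code t2 /\
    ucaus t1 x /\ ucaus t2 y /\ t1 <> t2 /\
    exists p, p \in upre t1 /\ p \in upre t2.

Definition uco (x y : code) : Prop :=
  x <> y /\ ~ ucaus x y /\ ~ ucaus y x /\ ~ uconfl x y.

Definition CO (X : seq code) : Prop :=
  (forall x y, x \in X -> y \in X -> x <> y -> uco x y) /\
  (exists l : seq code, forall t x, x \in X -> is_trans_code t -> ucaus t x -> t \in l).

Definition canonical (H : seq code) : Prop :=
  uniq H /\ H = choose [pred l : seq code | perm_eq l H] H.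

Inductive uplace : code -> Prop :=
| uplace_init : forall p, p \in m0 -> uplace p
| uplace_post : forall x p, utrans x -> p \in upost x -> uplace p
with utrans : code -> Prop :=
| utrans_intro : forall (t : T) (H : seq code),
    canonical H ->
    (forall p, p \in H -> uplace p) ->
    CO H ->
    perm_eq (pre N t) (pmap fS H) ->
    utrans (mkT t H).

Definition rev_fire (m1 m2 : seq code) : Prop :=
  exists x, utrans x /\ exists m3 : seq code,
    (perm_eq m1 (upre x ++ m3) /\ perm_eq m2 (upost x ++ m3)) \/
    (perm_eq m1 (upost x ++ m3) /\ perm_eq m2 (upre x ++ m3)).

End Unfolding.

(* Main.v *)
Require Import Defs.
From HB Require Import structures.
From mathcomp Require Import all_boot.
From Stdlib Require Import Relations.Relation_Operators Relations.Operators_Properties.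
Set Implicit Arguments. Unset Strict Implicit. Unset Printing Implicit Defensive.

Lemma split_pmap (A B : eqType) (f : A -> option B) (a b : seq B) (M : seq A) :
  perm_eq (pmap f M) (a ++ b) ->
  exists H R, perm_eq M (H ++ R) /\ perm_eq (pmap f H) a /\ perm_eq (pmap f R) b.
Proof.
elim: a M => [|x a IH] M /= hp.
  by exists [::], M.
have : x \in pmap f M by rewrite (perm_mem hp) inE eqxx.
rewrite mem_pmap => /mapP [y yM fy].
have hM := perm_to_rem yM.
have : perm_eq (pmap f (rem y M)) (a ++ b).
  have := perm_pmap f hM; rewrite /= -fy /= => h.
  have h' : perm_eq (x :: pmap f (rem y M)) (pmap f M) by rewrite perm_sym.
  by have := perm_trans h' hp; rewrite perm_cons.
move=> /IH [H [R [h1 [h2 h3]]]].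
exists (y :: H), R; split; last split => //.
  by apply: (perm_trans hM); rewrite /= perm_cons.
by rewrite /= -fy /= perm_cons.
Qed.

Lemma perm_disj (A : eqType) (a b c d : seq A) :
  (forall x, x \in a -> x \in c -> False) ->
  perm_eq (a ++ b) (c ++ d) ->
  exists e, perm_eq b (c ++ e) /\ perm_eq d (a ++ e).
Proof.
elim: a d => [|x a IH] d /= hd hp.
  by exists d; split.
have xd : x \in d.
  have : x \in c ++ d by rewrite -(perm_mem hp) inE eqxx.
  rewrite mem_cat => /orP [xc|//]; exfalso; apply: (hd x) => //; by rewrite inE eqxx.
have hD := perm_to_rem xd.
have : perm_eq (a ++ b) (c ++ rem x d).
  rewrite -(perm_cons x); apply: (perm_trans hp).
  rewrite -[x :: _]/([:: x] ++ c ++ rem x d) perm_sym perm_catCA perm_cat2l perm_sym; exact: hD.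
case/IH => [y ya yc|e [h1 h2]]; first by apply: (hd y) => //; rewrite inE ya orbT.
exists e; split => //.
by apply: (perm_trans hD); rewrite /= perm_cons.
Qed.

Section Aux.
Variables (S T : choiceType) (N : ptnet S T) (m : seq S).
Local Notation code := (code S T).
Local Notation mkP := (@mkP S T).
Local Notation mkT := (@mkT S T).
Local Notation decT := (@decT S T).
Local Notation fS := (@fS S T).
Local Notation upost := (upost N).
Local Notation upre := (@upre S T).
Local Notation places_of := (@places_of S T).

Lemma decT_mkP a h i : decT (mkP a h i) = None. Proof. by []. Qed.
Lemma decT_mkT t H : decT (mkT t H) = Some (t, H). Proof. by []. Qed.

Lemma decT_some y t H : decT y = Some (t, H) -> y = mkT t H.
Proof.
case: y => [?|n l] //=; case: n => [|[|?]] //; case: l => [|[[[?|?]|?]|??] l] //= [-> ->] //.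
Qed.

Lemma mem_places ms h x : x \in places_of ms h -> exists a i, x = mkP a h i.
Proof. by move=> /flattenP [s /mapP [a _ ->] /mapP [i _ ->]]; exists a, i. Qed.

Lemma mem_upost x y : x \in upost y ->
  (exists t H, y = mkT t H) /\ exists a i, x = mkP a (Some y) i.
Proof.
rewrite /upost; case E: (decT y) => [[t H]|] //= Hx.
split; first by exists t, H; exact: decT_some.
exact: mem_places Hx.
Qed.

Lemma upre_place a h i : upre (mkP a h i) = [::]. Proof. by []. Qed.
Lemma upost_place a h i : upost (mkP a h i) = [::]. Proof. by []. Qed.

Lemma mkP_inj a b h1 h2 i j : mkP a h1 i = mkP b h2 j -> a = b /\ i = j /\
   (if h1 is Some x then x else GenTree.Node 2 [::]) = (if h2 is Some x then x else GenTree.Node 2 [::]).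
Proof. by case. Qed.

Lemma upost_inj x y p : p \in upost x -> p \in upost y -> x = y.
Proof.
move=> /mem_upost [_ [a [i ->]]] /mem_upost [_ [b [j]]] /mkP_inj [_ [_]] //.
Qed.

Lemma m0_place p : p \in m0 T m -> exists a i, p = mkP a None i.
Proof. exact: mem_places. Qed.

Lemma m0_upost p y : p \in m0 T m -> p \in upost y -> False.
Proof.
move=> /m0_place [a [i ->]] /mem_upost [[t [H ->]] [b [j /mkP_inj [_ [_]]]]] //.
Qed.

Lemma places_uniq ms h : uniq (places_of ms h).
Proof.
apply: allpairs_uniq_dep; first exact: undup_uniq.
  by move=> a _; exact: iota_uniq.
move=> [a i] [b j] _ _ /= /mkP_inj [ab [ij _]]; subst b j; done.
Qed.

Lemma pmap_iota a h k n : pmap fS [seq mkP a h i | i <- iota k n] = nseq n a.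
Proof. by elim: n k => [|n IH] k //=; rewrite IH. Qed.

Lemma pmap_places ms h : perm_eq (pmap fS (places_of ms h)) ms.
Proof.
rewrite /places_of.
have -> : forall s, pmap fS (flatten [seq [seq mkP a h i | i <- iota 1 (count_mem a ms)] | a <- s])
   = flatten [seq nseq (count_mem a ms) a | a <- s].
  by elim=> [|a s IH] //=; rewrite pmap_cat IH pmap_iota.
exact: perm_count_undup.
Qed.


Hypothesis Hpre : forall t : T, pre N t != [::].
Hypothesis Hpost : forall t : T, post N t != [::].

Definition fwd (M1 M2 : seq code) := exists x, utrans N m x /\ exists r,
  perm_eq M1 (upre x ++ r) /\ perm_eq M2 (upost x ++ r).
Definition bwd (M1 M2 : seq code) := exists x, utrans N m x /\ exists r,
  perm_eq M1 (upost x ++ r) /\ perm_eq M2 (upre x ++ r).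

Fixpoint F k M : Prop := match k with 0 => is_true (perm_eq M (m0 T m)) | k.+1 => exists M1, F k M1 /\ fwd M1 M end.

Lemma F_perm k M M' : perm_eq M M' -> F k M -> F k M'.
Proof.
case: k => [|k] /= h.
  by rewrite -(permPl h).
move=> [M1 [h1 [x [ux [r [e1 e2]]]]]]; exists M1; split => //; exists x; split => //.
by exists r; rewrite -(permPl h).
Qed.

Lemma utrans_form x : utrans N m x -> exists t H, x = mkT t H /\ perm_eq (pre N t) (pmap fS H).
Proof. by case=> t H _ _ _ h; exists t, H. Qed.

Lemma upost_ne x : utrans N m x -> exists p, p \in upost x.
Proof.
move=> /utrans_form [t [H [-> _]]].
have := pmap_places (post N t) (Some (mkT t H)).
rewrite /upost decT_mkT.
case E: (places_of _ _) => [|p l]; first by rewrite /= perm_sym => /perm_nilP Ep; move: (Hpost t); rewrite Ep.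
by exists p; rewrite inE eqxx.
Qed.

Lemma back k : forall M M', F k M -> bwd M M' -> exists k', F k' M'.
Proof.
elim: k => [|k IH] M M' /=.
  move=> h0 [x [ux [r [e1 e2]]]]; have [p pp] := upost_ne ux.
  have : p \in M by rewrite (perm_mem e1) mem_cat pp.
  rewrite (perm_mem h0) => pm; case: (m0_place pm) => a [i Ep].
  by case: (mem_upost pp) => [[t [H Ex]] [b [j]]]; rewrite Ep Ex => /mkP_inj [_ [_]].
move=> [M1 [hF [y [uy [r [f1 f2]]]]]] [x [ux [r3 [e1 e2]]]].
have h : perm_eq (upost x ++ r3) (upost y ++ r) by rewrite -(permPl e1).
case: (eqVneq x y) => [exy|nxy].
  subst y; rewrite perm_cat2l in h.
  exists k; apply: (F_perm _ hF).
  by rewrite (permPl f1) perm_sym (permPl e2) perm_cat2l.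
case: (perm_disj _ h) => [p px py|e [h1 h2]].
  by move: nxy; rewrite (upost_inj px py) eqxx.
have [k' Hk'] : exists k', F k' (upre x ++ (upre y ++ e)).
  apply: (IH M1) => //; exists x; split => //; exists (upre y ++ e); split => //.
  by rewrite (permPl f1) (perm_catl _ h2) perm_catCA.
exists k'.+1, (upre x ++ (upre y ++ e)); split => //; exists y; split => //.
exists (upre x ++ e); split; first by rewrite perm_catCA.
by rewrite (permPl e2) (perm_catl _ h1) perm_catCA.
Qed.

Lemma rev_F M : clos_refl_trans _ (rev_fire N m) (m0 T m) M -> exists k, F k M.
Proof.
move/clos_rt_rtn1_iff; elim => [|M1 M2 st _ [k Hk]]; first by exists 0; exact: perm_refl.
case: st => x [ux [r [[e1 e2]|[e1 e2]]]].
  by exists k.+1, M1; split => //; exists x; split => //; exists r.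
by apply: (back Hk); exists x; split => //; exists r.
Qed.

Lemma F_reach k M : F k M -> reach (fire N) m (pmap fS M).
Proof.
elim: k M => [|k IH] M /=.
  move=> h; exists m; split; first exact: rt_refl.
  by rewrite perm_sym (permPl (perm_pmap fS h)); exact: pmap_places.
move=> [M1 [/IH [m1 [c1 p1]] [y [uy [r [f1 f2]]]]]].
have [t [H [Ey Ht]]] := utrans_form uy.
exists (pmap fS M); split => //.
apply: (rt_trans _ _ _ m1) => //; apply: rt_step.
exists t, (pmap fS r); split.
  rewrite (permPl p1) (permPl (perm_pmap fS f1)) pmap_cat Ey /= perm_sym.
  by rewrite (perm_catr _ Ht).
rewrite (permPl (perm_pmap fS f2)) pmap_cat Ey /upost decT_mkT.
by rewrite (perm_catr _ (pmap_places _ _)).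
Qed.

Record Inv (C M : seq code) : Prop := {
  inv_tr : forall x, x \in C -> utrans N m x;
  inv_uniq : uniq M;
  inv_past : forall p, p \in M -> p \in m0 T m \/ exists2 w, w \in C & p \in upost w;
  inv_cons : forall p w, p \in M -> w \in C -> p \in upre w -> False;
  inv_pre : forall w p, w \in C -> p \in upre w -> p \in m0 T m \/ exists2 w', w' \in C & p \in upost w';
  inv_cf : forall w1 w2 p, w1 \in C -> w2 \in C -> w1 <> w2 -> p \in upre w1 -> p \in upre w2 -> False }.

Definition Past (C : seq code) x := x \in C \/ x \in m0 T m \/ exists2 w, w \in C & x \in upost w.

Lemma past_down C M x y : Inv C M -> uprec N y x -> Past C x -> Past C y.
Proof.
move=> I hy [xC|[xm|[w wC xw]]].
- case: hy => [yx|xy].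
    by case: (inv_pre I xC yx) => h; right; [left|right].
  have [t [H [Ex _]]] := utrans_form (inv_tr I xC).
  by case: (mem_upost xy) => _ [a [i]]; rewrite Ex.
- case: hy => [yx|xy]; last by case: (m0_upost xm xy).
  by case: (m0_place xm) yx => a [i ->].
- case: hy => [yx|xy].
    by case: (mem_upost xw) yx => _ [a [i ->]].
  by left; rewrite -(upost_inj xw xy).
Qed.

Lemma past_caus C M x y : Inv C M -> ucaus N y x -> Past C x -> Past C y.
Proof.
move=> I; elim => [a b st|a|a b c _ IH1 _ IH2] //.
  exact: past_down I st.
by move=> h; apply: IH1; apply: IH2.
Qed.

Lemma past_trans C t : is_trans_code t -> Past C t -> t \in C.
Proof.
rewrite /is_trans_code => ht [//|[tm|[w _ tw]]].
  by case: (m0_place tm) ht => a [i ->].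
by case: (mem_upost tw) ht => _ [a [i ->]].
Qed.

Lemma M_past C M p : Inv C M -> p \in M -> Past C p.
Proof. by move=> I /(inv_past I) [h|h]; right; [left|right]. Qed.

Lemma M_place C M p : Inv C M -> p \in M -> decT p = None.
Proof.
move=> I /(inv_past I) [h|[w _ h]].
  by case: (m0_place h) => a [i ->].
by case: (mem_upost h) => _ [a [i ->]].
Qed.

Lemma M_notcaus C M x y : Inv C M -> x \in M -> y \in M -> x <> y -> ~ ucaus N x y.
Proof.
move=> I xM yM nxy /clos_rt_rt1n_iff h; move: yM nxy; case: h => [//|z w hz hzw yM _].
have Pz : Past C z.
  apply: (past_caus I _ (M_past I yM)); exact/clos_rt_rt1n_iff.
case: hz => [xz|zx].
  have tz : is_trans_code z.
    by move: xz; rewrite /upre /is_trans_code; case: (decT z) => [[]|].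
  exact: (inv_cons I xM (past_trans tz Pz) xz).
by move: zx; rewrite /upost (M_place I xM).
Qed.

Lemma M_co C M x y : Inv C M -> x \in M -> y \in M -> x <> y -> uco N x y.
Proof.
move=> I xM yM nxy; split => //; split; first exact: M_notcaus I xM yM nxy.
split; first by apply: M_notcaus I yM xM _ => h; apply: nxy.
move=> [t1 [t2 [i1 [i2 [c1 [c2 [ne [p [p1 p2]]]]]]]]].
have h1 := past_trans i1 (past_caus I c1 (M_past I xM)).
have h2 := past_trans i2 (past_caus I c2 (M_past I yM)).
exact: (inv_cf I h1 h2 ne p1 p2).
Qed.

Lemma M_CO C M H : Inv C M -> (forall p, p \in H -> p \in M) -> CO N H.
Proof.
move=> I HM; split.
  by move=> x y xH yH; apply: M_co I (HM _ xH) (HM _ yH).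
exists C => t x xH tt c.
exact: past_trans tt (past_caus I c (M_past I (HM _ xH))).
Qed.

Lemma step C M t m3 : Inv C M -> perm_eq (pmap fS M) (pre N t ++ m3) ->
  exists C' M', Inv C' M' /\ rev_fire N m M M' /\ perm_eq (pmap fS M') (post N t ++ m3).
Proof.
move=> I /split_pmap [H [R [hM [hH hR]]]].
pose Hc := choose [pred l | perm_eq l H] H.
have hHc : perm_eq Hc H by apply: (chooseP (P := [pred l | perm_eq l H])); exact: perm_refl.
have uHR : uniq (H ++ R) by rewrite -(perm_uniq hM); exact: inv_uniq I.
move: (uHR); rewrite cat_uniq => /and3P [uH dHR uR].
have HcM : forall p, p \in Hc -> p \in M.
  by move=> p; rewrite (perm_mem hHc) (perm_mem hM) mem_cat => ->.
have RM : forall p, p \in R -> p \in M.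
  by move=> p; rewrite (perm_mem hM) mem_cat => ->; rewrite orbT.
have HR : forall p, p \in Hc -> p \in R -> False.
  move=> p; rewrite (perm_mem hHc) => pH pR; move/hasP: dHR; apply.
  by exists p.
have canon : canonical Hc.
  split; first by rewrite (perm_uniq hHc).
  rewrite (@eq_choose _ [pred l | perm_eq l Hc] [pred l | perm_eq l H]); last first.
    by move=> l /=; exact: (permPr hHc).
  by apply: choose_id; rewrite /= ?perm_refl.
have hpre : perm_eq (pre N t) (pmap fS Hc).
  by rewrite perm_sym (permPl (perm_pmap fS hHc)).
pose x := mkT t Hc.
have ux : utrans N m x.
  apply: utrans_intro => //.
  - move=> p /HcM pM.
    case: (inv_past I pM) => [h|[w wC pw]]; first exact: uplace_init.
    exact: (uplace_post (inv_tr I wC) pw).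
  - exact: M_CO I HcM.
have upx : upre x = Hc by [].
have xC : x \notin C.
  apply/negP => xC.
  case E: Hc hpre => [|p l].
    by rewrite /= => /perm_nilP Ep; move: (Hpre t); rewrite Ep.
  move=> _; apply: (inv_cons I (HcM p _) xC); rewrite ?upx E inE eqxx //.
have A : forall p, p \in upost x -> p \in M -> False.
  move=> p px /(inv_past I) [pm|[w wC pw]]; first exact: m0_upost pm px.
  by move: xC; rewrite (upost_inj px pw) wC.
exists (x :: C), (upost x ++ R); split; last split.
- split.
  + move=> y; rewrite inE => /orP [/eqP -> //|yC]; exact: (inv_tr I yC).
  + rewrite cat_uniq places_uniq uR andbT /=; apply/hasP => [[p pR px]].
    exact: A px (RM _ pR).
  + move=> p; rewrite mem_cat => /orP [px|pR].
      by right; exists x => //; rewrite inE eqxx.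
    case: (inv_past I (RM _ pR)) => [h|[w wC pw]]; first by left.
    by right; exists w => //; rewrite inE wC orbT.
  + move=> p w; rewrite mem_cat inE => /orP [px|pR] /orP [/eqP ->|wC] pw.
    * by apply: A px (HcM _ _); rewrite -upx.
    * case: (inv_pre I wC pw) => [pm|[w' w'C pw']]; first exact: m0_upost pm px.
      by move: xC; rewrite (upost_inj px pw') w'C.
    * by apply: HR pR; rewrite -upx.
    * have h1 := RM p pR. have h2 := inv_cons I h1. have h3 := h2 _ wC. exact: h3 pw.
  + move=> w p; rewrite inE => /orP [/eqP ->|wC] pw.
      case: (inv_past I (HcM _ pw)) => [h|[w' w'C pw']]; first by left.
      by right; exists w' => //; rewrite inE w'C orbT.
    case: (inv_pre I wC pw) => [h|[w' w'C pw']]; first by left.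
    by right; exists w' => //; rewrite inE w'C orbT.
  + move=> w1 w2 p; rewrite !inE => /orP [/eqP ->|w1C] /orP [/eqP ->|w2C] ne p1 p2.
    * by [].
    * rewrite upx in p1; exact: (inv_cons I (HcM p p1) w2C p2).
    * rewrite upx in p2; exact: (inv_cons I (HcM p p2) w1C p1).
    * have h := inv_cf I w1C w2C ne. exact: h p1 p2.
- exists x; split => //; exists R; left; split; last exact: perm_refl.
  by rewrite (permPl hM) upx perm_cat2r perm_sym.
- rewrite pmap_cat /upost decT_mkT.
  by rewrite (perm_catr _ (pmap_places _ _)) perm_cat2l.
Qed.

Lemma Inv0 : Inv [::] (m0 T m).
Proof.
split => //; first exact: places_uniq.
by move=> p pm; left.
Qed.

Lemma fwd_dir m1 : clos_refl_trans _ (fire N) m m1 -> exists C M, Inv C M /\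
  clos_refl_trans _ (rev_fire N m) (m0 T m) M /\ perm_eq (pmap fS M) m1.
Proof.
move/clos_rt_rtn1_iff; elim => [|m2 m3 st _ [C [M [I [c h]]]]].
  exists [::], (m0 T m); split; first exact: Inv0.
  split; [exact: rt_refl | exact: pmap_places].
case: st => t [r [e1 e2]].
have [C' [M' [I' [st' h']]]] := step I (perm_trans h e1).
exists C', M'; split => //; split; first by apply: rt_trans c (rt_step _ _ _ _ st').
by rewrite (permPl h') perm_sym.
Qed.

End Aux.

Unset Implicit Arguments.
Set Strict Implicit.

Theorem mainTheorem13 (S T : choiceType) (N : ptnet S T) (m : seq S)
    (Hpre : forall t : T, pre N t != [::])
    (Hpost : forall t : T, post N t != [::])
    (m' : seq S) :
  reach (fire N) m m' <->
  exists m'' : seq (code S T),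
    (forall p, p \in m'' -> uplace N m p) /\
    reach (rev_fire N m) (m0 T m) m'' /\
    perm_eq m' (pmap (@fS S T) m'').
Proof.
split.
  move=> [m1 [c h]].
  have [C [M [I [c' h']]]] := fwd_dir Hpre c.
  exists M; split.
    move=> p pM; case: (inv_past I pM) => [pm|[w wC pw]]; first exact: uplace_init.
    exact: uplace_post (inv_tr I wC) pw.
  split; first by exists M; split => //; exact: perm_refl.
  by rewrite perm_sym (permPl h').
move=> [m'' [_ [[M [c h]] hm]]].
have [k Hk] := rev_F Hpost c.
have [m1 [c1 h1]] := F_reach Hk.
exists m1; split => //.
by rewrite (permPl h1) perm_sym (permPl hm) perm_sym perm_pmap.
Qed.
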